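(* Let $k,\ell$ be integers with $1\leq k\leq \ell$, let $L$ be a (right) Leibniz algebra and let $B$ be an ideal of $L$ which is $\mathrm{Es}_k$-right nil. Let $P=a_ma_{m-1}\cdots a_2a_1$ be a right product of elements $a_1,\dots,a_m\in L$ of which at least $2\ell$ belong to $B$. Then $P\in (B^{\ell})_{(L,k)}$.
   Context: A (right) Leibniz algebra is a vector space $L$ over a field $F$ (characteristic $\neq 2$, finite-dimensional) with a bilinear product $(x,y)\mapsto xy$ satisfying $x(yz)=(xy)z-(xz)y$. For subspaces $U,V$, $UV$ is the span of all $uv$; right powers $B^1=B$, $B^{j+1}=B^jB$. An ideal is a subspace $B$ with $LB\subseteq B$, $BL\subseteq B$. Right product: $a_m\cdots a_1:=((\cdots((a_ma_{m-1})a_{m-2})\cdots)a_2)a_1$. For a subspace $D\subseteq L$ and integer $k\geq 1$, $D_{(L,k)}$ is the subspace spanned by all right products $d\,x_k\cdots x_2x_1$ with $d\in D$, $x_1,\dots,x_k\in L$. $\mathrm{Ess}(L)$ is the ideal generated by all squares $xx$, and $\mathrm{Es}(B)=B\cap\mathrm{Ess}(L)$. A nonzero ideal $B$ is called $\mathrm{Es}_k$-right nil if $\mathrm{Es}(B)_{(L,k)}=\{0\}$. *)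

(* Defs.v *)
From HB Require Import structures.
From mathcomp Require Import all_boot all_order all_algebra.
Set Implicit Arguments. Unset Strict Implicit. Unset Printing Implicit Defensive.
Import GRing.Theory.
Local Open Scope ring_scope.

Section Leibniz.
Variables (F : fieldType) (V : vectType F) (mul : V -> V -> V).

Definition bilinear_prod : Prop :=
  (forall a : V, linear (mul a)) /\ (forall b : V, linear (fun a => mul a b)).

Definition right_leibniz : Prop :=
  forall x y z : V, mul x (mul y z) = mul (mul x y) z - mul (mul x z) y.

(* right product a_m ... a_1 := ((..(a_m a_{m-1}) ..) a_2) a_1, encoded as
   rprod a_m [:: a_{m-1}; ...; a_1] *)
Definition rprod (a : V) (s : seq V) : V := foldl mul a s.

Fixpoint tuples (s : seq V) (k : nat) : seq (seq V) :=
  if k is k'.+1 then [seq x :: t | x <- s, t <- tuples s k'] else [:: [::]].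

(* UW = span of all uw (by bilinearity: span of products of basis vectors) *)
Definition prodv (U W : {vspace V}) : {vspace V} :=
  <<[seq mul u w | u <- vbasis U, w <- vbasis W]>>%VS.

Fixpoint rpow (B : {vspace V}) (n : nat) : {vspace V} :=
  match n with
  | 0 | 1 => B
  | n'.+1 => prodv (rpow B n') B
  end.

(* D_(L,k) = span of all d x_k ... x_1 (by multilinearity: basis vectors) *)
Definition rspan (D : {vspace V}) (k : nat) : {vspace V} :=
  <<[seq rprod d xs | d <- vbasis D, xs <- tuples (vbasis fullv) k]>>%VS.

Definition is_ideal (B : {vspace V}) : Prop :=
  forall x b : V, b \in B -> mul x b \in B /\ mul b x \in B.

Definition in_Ess (x : V) : Prop :=
  forall I : {vspace V}, is_ideal I -> (forall y : V, mul y y \in I) -> x \in I.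

(* B is Es_k-right nil: B nonzero and Es(B)_(L,k) = 0, i.e. every generator
   d x_k ... x_1 with d in Es(B) = B ∩ Ess(L) vanishes *)
Definition Es_right_nil (B : {vspace V}) (k : nat) : Prop :=
  B != 0%VS /\
  forall (d : V) (xs : seq V), d \in B -> in_Ess d -> size xs = k ->
    rprod d xs = 0.

End Leibniz.

(* Main.v *)
Require Import Defs.
From HB Require Import structures.
From mathcomp Require Import all_boot all_order all_algebra zify.
Import GRing.Theory.
Local Open Scope ring_scope.

Section S.
Variables (F : fieldType) (V : vectType F) (mul : V -> V -> V).
Hypothesis hbil : bilinear_prod mul.
Hypothesis hleib : right_leibniz mul.

Lemma mulDr a u v : mul a (u + v) = mul a u + mul a v.
Proof. by have [_ ->] := GRing.semilinear_linear (hbil.1 a). Qed.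
Lemma mulZr a c u : mul a (c *: u) = c *: mul a u.
Proof. by have [-> _] := GRing.semilinear_linear (hbil.1 a). Qed.
Lemma mulDl b u v : mul (u + v) b = mul u b + mul v b.
Proof. by have [_ ->] := GRing.semilinear_linear (hbil.2 b). Qed.
Lemma mulZl b c u : mul (c *: u) b = c *: mul u b.
Proof. by have [-> _] := GRing.semilinear_linear (hbil.2 b). Qed.
Lemma mul0l b : mul 0 b = 0.
Proof. by have := mulZl b 0 0; rewrite !scale0r. Qed.
Lemma mul0r a : mul a 0 = 0.
Proof. by have := mulZr a 0 0; rewrite !scale0r. Qed.

Lemma mulsuml b n (c : 'I_n -> F) (v : 'I_n -> V) :
  mul (\sum_i c i *: v i) b = \sum_i c i *: mul (v i) b.
Proof.
rewrite (big_morph (fun u => mul u b) (fun u v => mulDl b u v) (mul0l b)).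
by apply: eq_bigr => i _; rewrite mulZl.
Qed.
Lemma mulsumr a n (c : 'I_n -> F) (v : 'I_n -> V) :
  mul a (\sum_i c i *: v i) = \sum_i c i *: mul a (v i).
Proof.
rewrite (big_morph (fun u => mul a u) (fun u v => mulDr a u v) (mul0r a)).
by apply: eq_bigr => i _; rewrite mulZr.
Qed.

Lemma span_ind (S : seq V) (P : V -> Prop) :
  P 0 -> (forall c u v, P u -> P v -> P (c *: u + v)) ->
  (forall g, g \in S -> P g) -> forall v, v \in <<S>>%VS -> P v.
Proof.
move=> P0 PD PS v /(@coord_span _ _ _ (in_tuple S)) ->.
apply: (big_ind P) => //.
  by move=> x y Px Py; rewrite -(scale1r x); apply: PD.
move=> i _; rewrite -[_ *: _]addr0; apply: PD => //.
by apply: PS; rewrite mem_nth.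
Qed.

Lemma prodv_mem (U W : {vspace V}) u w : u \in U -> w \in W -> mul u w \in prodv mul U W.
Proof.
move=> /coord_vbasis -> /coord_vbasis ->.
rewrite mulsuml; apply: memv_suml => i _; apply: memvZ.
rewrite mulsumr; apply: memv_suml => j _; apply: memvZ.
apply: memv_span; apply: (allpairs_f mul); by rewrite mem_nth ?size_tuple.
Qed.

Lemma tuplesP (S : seq V) k (ys : seq V) : (ys \in tuples S k) = (size ys == k) && all (mem S) ys.
Proof.
elim: k ys => [|k IH] ys /=; first by rewrite inE; case: ys.
apply/allpairsP/idP => [[[x t] /= [xS tT ->]]|].
  by move: tT; rewrite IH /= xS eqSS.
case: ys => //= x t; rewrite eqSS => /and3P[st xS alt].
by exists (x, t); split => //; rewrite IH st.
Qed.


Variable (B : {vspace V}).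
Hypothesis hB : is_ideal mul B.

Lemma rpowR n x v : v \in rpow mul B n -> mul v x \in rpow mul B n.
Proof.
elim: n x v => [|n IH] x v; first by move=> /(hB x) [_ ->].
case: n IH => [|n] IH; first by move=> /(hB x) [_ ->].
rewrite [rpow _ _ n.+2]/=.
move: v; apply: span_ind.
- by rewrite mul0l mem0v.
- by move=> c u v Pu Pv; rewrite mulDl mulZl memvD ?memvZ.
move=> g /allpairsP [[u w] /= [uB wB ->]].
have -> : mul (mul u w) x = mul u (mul w x) + mul (mul u x) w by rewrite hleib subrK.
apply: memvD; apply: prodv_mem.
- exact: vbasis_mem.
- by have [_ ->] := hB x w (vbasis_mem wB).
- by apply: IH; apply: vbasis_mem.
- exact: vbasis_mem.
Qed.

Lemma rpowM n v b : v \in rpow mul B n -> b \in B -> mul v b \in rpow mul B n.+1.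
Proof.
case: n => [|n] vB bB; first by have [_ ->] := hB b v vB.
by apply: prodv_mem.
Qed.

Lemma rpow_dec n v : v \in rpow mul B n.+1 -> v \in rpow mul B n.
Proof.
case: n => [//|n]; rewrite [rpow _ _ n.+2]/=.
move: v; apply: span_ind.
- by rewrite mem0v.
- by move=> c u v Pu Pv; rewrite memvD ?memvZ.
move=> g /allpairsP [[u w] /= [uB wB ->]].
by apply: (rpowR n.+1); apply: vbasis_mem.
Qed.

Lemma rpow_mono m n v : (n <= m)%N -> v \in rpow mul B m -> v \in rpow mul B n.
Proof.
move=> /subnK <-; elim: (m - n)%N => [//|d IH] /= H.
by apply: IH; apply: rpow_dec.
Qed.

Lemma prefixP a s : (0 < count (fun x => x \in B) (a :: s))%N ->
  rprod mul a s \in rpow mul B (count (fun x => x \in B) (a :: s)).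
Proof.
elim/last_ind: s => [|s x IH] /=.
  by case aB: (a \in B).
rewrite /rprod foldl_rcons -cats1 count_cat /= addn0 -/(rprod mul a s).
case xB: (x \in B) => /=; last first.
  by rewrite addn0 => H; apply: rpowR; apply: IH.
rewrite addn1 addnS => _.
move: IH; rewrite /= -/(rprod mul a s).
case: (posnP ((a \in B) + count (fun x => x \in B) s)%N) => [->|H] IH.
  by have [-> _] := hB (rprod mul a s) x xB.
by apply: rpowM => //; apply: IH.
Qed.


Lemma rspan_step (D : {vspace V}) k v x :
  v \in rspan mul D k -> mul v x \in rspan mul D k.+1.
Proof.
move: v; apply: span_ind.
- by rewrite mul0l mem0v.
- by move=> c u v Pu Pv; rewrite mulDl mulZl memvD ?memvZ.
move=> g /allpairsP [[d ys] /= [dD ysT ->]].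
rewrite (coord_vbasis (memvf x)) mulsumr; apply: memv_suml => i _; apply: memvZ.
have -> : mul (rprod mul d ys) (vbasis fullv)`_i = rprod mul d (rcons ys (vbasis fullv)`_i).
  by rewrite /rprod foldl_rcons.
apply: memv_span; apply: (allpairs_f (rprod mul)) => //.
move: ysT; rewrite !tuplesP size_rcons all_rcons eqSS => /andP[-> ->].
have H : (vbasis fullv)`_i \in vbasis (fullv : {vspace V}) by rewrite mem_nth ?size_tuple.
by apply/and3P; split.
Qed.

Lemma rspan_all (D : {vspace V}) d xs :
  d \in D -> rprod mul d xs \in rspan mul D (size xs).
Proof.
move=> dD; elim/last_ind: xs => [|xs x IH].
  rewrite /= (coord_vbasis dD); apply: memv_suml => i _; apply: memvZ.
  apply: memv_span.
  have := @allpairs_f _ _ _ (rprod mul) (vbasis D) (tuples (vbasis fullv) 0)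
     (vbasis D)`_i [::].
  by apply; rewrite ?mem_nth ?size_tuple ?inE.
by rewrite size_rcons /rprod foldl_rcons; apply: rspan_step.
Qed.
End S.

Theorem lemma4p3 (F : fieldType) (V : vectType F) (mul : V -> V -> V)
  (hchar : (2%:R : F) != 0)
  (hbil : bilinear_prod mul) (hleib : right_leibniz mul)
  (k l : nat) (hk : (1 <= k)%N) (hkl : (k <= l)%N)
  (B : {vspace V}) (hB : is_ideal mul B) (hnil : Es_right_nil mul B k)
  (a : V) (s : seq V)
  (hcount : (2 * l <= count (fun x => x \in B) (a :: s))%N) :
  rprod mul a s \in rspan mul (rpow mul B l) k.
Proof.
have hs : (k <= size s)%N.
  move: hcount; have := count_size (fun x => x \in B) (a :: s); rewrite /= => h1 h2; lia.
have hc := count_size (fun x => x \in B) (drop (size s - k) s).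
move: hcount; rewrite -{1}(cat_take_drop (size s - k) s) /= count_cat => hc2.
rewrite size_drop in hc.
rewrite -(cat_take_drop (size s - k) s) /rprod foldl_cat -/(rprod mul _ _).
set s1 := take _ s; set s2 := drop _ s.
have hs2 : size s2 = k by rewrite size_drop; lia.
rewrite -{1}hs2.
apply: (@rspan_all _ _ mul hbil).
apply: (@rpow_mono _ _ mul hbil hleib B hB (count (fun x => x \in B) (a :: s1))).
  rewrite /s1 /=; lia.
apply: (@prefixP _ _ mul hbil hleib B hB); rewrite /s1 /=; lia.
Qed.
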